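(* Let $A\in\mathbb{R}^{m\times n}$, $y\in\mathbb{R}^m$, $\lambda>0$, and let $x^\star$ be a global minimizer of $\min_{x}\frac{1}{2\lambda}\|Ax-y\|^2+\|Lx\|_{1,2}$. Let $\beta^\star=-\frac1\lambda A^\top(Ax^\star-y)$, let $\widehat{L}=L-P_{T_z}LP_{T_x^\perp}$ be the effective lifting operator associated with $x^\star$, $\widehat{u}_{\min}=\widehat{L}(\widehat{L}^\top\widehat{L})^{-1}\beta^\star$, and let $u^\dagger\in\mathbb{R}^p$ be given by $u^\dagger_{J_t}=(\widehat{u}_{\min})_{J_t}$ if $x^\star_{G_t}=0$ and $u^\dagger_{J_t}=x^\star_{G_t}/\|x^\star_{G_t}\|$ if $x^\star_{G_t}\ne0$. Then for every $t\in\{1,\dots,N\}$, $\|u^\dagger_{J_t}\|\le\|\beta^\star_{G_t}\|/w_t$.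
   Context: Let $n,N\in\mathbb{N}$, let $G_1,\dots,G_N\subseteq\{1,\dots,n\}$ be nonempty groups, possibly overlapping, with $\bigcup_iG_i=\{1,\dots,n\}$, and weights $w_i>0$. $x_G$ is the subvector of $x$ indexed by $G$ (increasing order). Let $p=\sum_i|G_i|$, partition $\{1,\dots,p\}$ into consecutive blocks $J_i=\{\sum_{j<i}|G_j|+1,\dots,\sum_{j\le i}|G_j|\}$, and define $L\in\mathbb{R}^{p\times n}$ by $(Lx)_{J_i}=w_ix_{G_i}$; $\|z\|_{1,2}=\sum_i\|z_{J_i}\|$ (Euclidean), so $\|Lx\|_{1,2}=\sum_iw_i\|x_{G_i}\|$. For $x\in\mathbb{R}^n$: $\mathcal{I}_x=\{t:x_{G_t}\ne0\}$; $\mathcal{E}_x=\{1,\dots,n\}\setminus\bigcup_{t\notin\mathcal{I}_x}G_t$, $T_x=\{x':\mathrm{supp}(x')\subseteq\mathcal{E}_x\}$; $\mathcal{E}_z=\bigcup_{t\in\mathcal{I}_x}J_t$, $T_z=\{z':\mathrm{supp}(z')\subseteq\mathcal{E}_z\}$. $P_T$ is the orthogonal (coordinate) projection onto $T$, $T^\perp$ the orthogonal complement. $\widehat{L}^\top\widehat{L}$ is invertible. *)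

(* Defs.v *)
From mathcomp Require Import all_boot all_order all_algebra.
From mathcomp Require Import reals.
Set Implicit Arguments. Unset Strict Implicit. Unset Printing Implicit Defensive.
Import Order.TTheory GRing.Theory Num.Theory.
Local Open Scope ring_scope.

Section GroupLasso.
Variables (R : realType) (n N : nat) (G : 'I_N -> {set 'I_n}) (w : 'I_N -> R).

Definition vnorm k (v : 'cV[R]_k) : R := Num.sqrt (\sum_(i < k) v i 0 ^+ 2).

Definition psize : nat := (\sum_(i < N) #|G i|)%N.

(* selection matrix: (Sel i *m x) = x_{G_i}, entries of G_i in increasing order *)
Definition Sel (i : 'I_N) : 'M[R]_(#|G i|, n) :=
  \matrix_(r < #|G i|, j < n) (j == enum_val r)%:R.

Definition subv (x : 'cV[R]_n) (i : 'I_N) : 'cV[R]_(#|G i|) := Sel i *m x.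

(* The lifting operator L : (Lx)_{J_i} = w_i x_{G_i}; the blocks J_i are consecutive *)
Definition Lop : 'M[R]_(psize, n) := \mxcol_(i < N) (w i *: Sel i).

Definition blockv (z : 'cV[R]_psize) (i : 'I_N) : 'cV[R]_(#|G i|) :=
  @submxcol R N (fun i => #|G i|) 1%N z i.

Definition l12 (z : 'cV[R]_psize) : R := \sum_(i < N) vnorm (blockv z i).

Definition active (x : 'cV[R]_n) (t : 'I_N) : bool := subv x t != 0.

Definition Ex (x : 'cV[R]_n) : {set 'I_n} :=
  [set j | [forall t, ~~ active x t ==> (j \notin G t)]].

(* orthogonal coordinate projections onto T_x, T_x^perp, T_z *)
Definition PTx (x : 'cV[R]_n) : 'M[R]_n := diag_mx (\row_j (j \in Ex x)%:R).
Definition PTxperp (x : 'cV[R]_n) : 'M[R]_n := diag_mx (\row_j (j \notin Ex x)%:R).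
Definition PTz (x : 'cV[R]_n) : 'M[R]_psize :=
  \mxdiag_(i < N) (((active x i)%:R)%:M : 'M[R]_(#|G i|)).

Definition Lhat (x : 'cV[R]_n) : 'M[R]_(psize, n) :=
  Lop - PTz x *m Lop *m PTxperp x.

Definition objective m (A : 'M[R]_(m, n)) (y : 'cV[R]_m) (lam : R) (x : 'cV[R]_n) : R :=
  (2 * lam)^-1 * vnorm (A *m x - y) ^+ 2 + l12 (Lop *m x).

Definition beta m (A : 'M[R]_(m, n)) (y : 'cV[R]_m) (lam : R) (x : 'cV[R]_n) : 'cV[R]_n :=
  - (lam^-1 *: (A^T *m (A *m x - y))).

Definition umin m (A : 'M[R]_(m, n)) (y : 'cV[R]_m) (lam : R) (x : 'cV[R]_n) : 'cV[R]_psize :=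
  Lhat x *m invmx ((Lhat x)^T *m Lhat x) *m beta A y lam x.

Definition udag m (A : 'M[R]_(m, n)) (y : 'cV[R]_m) (lam : R) (x : 'cV[R]_n) : 'cV[R]_psize :=
  \mxcol_(t < N) (if active x t then (vnorm (subv x t))^-1 *: subv x t
                  else blockv (umin A y lam x) t).

End GroupLasso.

Arguments blockv {R n N} G z i.

(* Main.v *)
Require Import Defs.
From mathcomp Require Import all_boot all_order all_algebra.
From mathcomp Require Import reals ring lra.
Set Implicit Arguments. Unset Strict Implicit. Unset Printing Implicit Defensive.
Import Order.TTheory GRing.Theory Num.Theory.
Local Open Scope ring_scope.

Section Aux.
Variable R : realType.

Definition dot k (a b : 'cV[R]_k) : R := \sum_(i < k) a i 0 * b i 0.

Lemma dotE k (a b : 'cV[R]_k) : (a^T *m b) 0 0 = dot a b.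
Proof. by rewrite mxE; apply: eq_bigr => i _; rewrite mxE. Qed.

Lemma dot_ge0 k (a : 'cV[R]_k) : 0 <= dot a a.
Proof. by apply: sumr_ge0 => i _; rewrite -expr2 sqr_ge0. Qed.

Lemma vnorm_ge0 k (a : 'cV[R]_k) : 0 <= vnorm a.
Proof. exact: sqrtr_ge0. Qed.

Lemma vnorm_sq k (a : 'cV[R]_k) : vnorm a ^+ 2 = dot a a.
Proof.
rewrite /vnorm sqr_sqrtr; last exact: (dot_ge0 a).
by apply: eq_bigr => i _; rewrite expr2.
Qed.

Lemma dot_sqK k (a : 'cV[R]_k) : dot a a = vnorm a ^+ 2.
Proof. by rewrite vnorm_sq. Qed.

Lemma vnormZ k c (a : 'cV[R]_k) : vnorm (c *: a) = `|c| * vnorm a.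
Proof.
rewrite /vnorm -sqrtr_sqr -sqrtrM ?sqr_ge0 // mulr_sumr.
by congr Num.sqrt; apply: eq_bigr => i _; rewrite mxE exprMn.
Qed.

Lemma vnorm_le k (a b : 'cV[R]_k) :
  (forall i, `|a i 0| <= `|b i 0|) -> vnorm a <= vnorm b.
Proof.
move=> H; rewrite /vnorm ler_sqrt; last by apply: sumr_ge0 => i _; rewrite sqr_ge0.
apply: ler_sum => i _; rewrite -(real_normK (num_real (a i 0))).
rewrite -(real_normK (num_real (b i 0))) !expr2.
by apply: ler_pM => //; rewrite normr_ge0.
Qed.

Lemma vnorm_gt0 k (a : 'cV[R]_k) : a != 0 -> 0 < vnorm a.
Proof.
move=> Ha; rewrite /vnorm sqrtr_gt0 lt_def sumr_ge0 ?andbT; last first.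
  by move=> i _; rewrite sqr_ge0.
apply/negP => /eqP /psumr_eq0P H.
move/negP: Ha; apply; apply/eqP/matrixP => i j.
rewrite (ord1 j) mxE; apply/eqP; rewrite -sqrf_eq0; apply/eqP.
by apply: H => // l _; rewrite sqr_ge0.
Qed.

Lemma cauchy_schwarz k (a b : 'cV[R]_k) : dot a b <= vnorm a * vnorm b.
Proof.
set na := vnorm a; set nb := vnorm b.
have H0 : 0 <= \sum_(i < k) (a i 0 * nb - b i 0 * na) ^+ 2.
  by apply: sumr_ge0 => i _; rewrite sqr_ge0.
have E : \sum_(i < k) (a i 0 * nb - b i 0 * na) ^+ 2 =
   2 * (na * nb) * (na * nb - dot a b).
  have Ea : dot a a = na ^+ 2 by rewrite vnorm_sq.
  have Eb : dot b b = nb ^+ 2 by rewrite vnorm_sq.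
  transitivity (dot a a * nb ^+ 2 - 2 * na * nb * dot a b + dot b b * na ^+ 2).
    rewrite /dot !mulr_suml mulr_sumr -sumrB -big_split; apply: eq_bigr => i _.
    by rewrite /=; ring.
  by rewrite (dot_sqK a) (dot_sqK b) -/na -/nb; ring.
have nag : 0 <= na by exact: vnorm_ge0.
have nbg : 0 <= nb by exact: vnorm_ge0.
rewrite le_eqVlt in nag; case/orP: nag => [/eqP na0|nap].
  have -> : a = 0.
    apply/eqP; apply: contraT => /vnorm_gt0; by rewrite -/na -na0 ltxx.
  rewrite /dot big1; first by rewrite -na0 mul0r.
  by move=> i _; rewrite mxE mul0r.
rewrite le_eqVlt in nbg; case/orP: nbg => [/eqP nb0|nbp].
  have -> : b = 0.
    apply/eqP; apply: contraT => /vnorm_gt0; by rewrite -/nb -nb0 ltxx.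
  rewrite /dot big1; first by rewrite -nb0 mulr0.
  by move=> i _; rewrite mxE mulr0.
rewrite E in H0; rewrite -subr_ge0.
by rewrite pmulr_rge0 // in H0; rewrite mulr_gt0 // mulr_gt0.
Qed.

Lemma dot_expand k (a b : 'cV[R]_k) c :
  dot (a - c *: b) (a - c *: b) = dot a a - 2 * c * dot a b + c ^+ 2 * dot b b.
Proof.
rewrite /dot mulr_sumr mulr_sumr -sumrB -big_split; apply: eq_bigr => i _.
by rewrite /= !mxE; ring.
Qed.

Lemma limit_arg (a b c : R) : 0 <= c ->
  (forall e, 0 < e -> e <= 1 -> a <= b + e * c) -> a <= b.
Proof.
move=> c0 H; rewrite leNgt; apply/negP => ba.
set c' := c + 1.
have c'p : 0 < c' by rewrite /c' ltr_wpDl.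
set e := Order.min 1 ((a - b) / (2 * c')).
have ep : 0 < e by rewrite lt_min ltr01 /= divr_gt0 ?subr_gt0 // mulr_gt0.
have e1 : e <= 1 by rewrite ge_min lexx.
have := H e ep e1.
have : e * c <= e * c' by rewrite ler_pM2l // /c' lerDl.
have : e * c' <= (a - b) / 2.
  have : e <= (a - b) / (2 * c') by rewrite ge_min lexx orbT.
  rewrite -(ler_pM2r c'p) => h; apply: (le_trans h).
  by rewrite invfM mulrA mulfVK // gt_eqF.
lra.
Qed.

End Aux.

Section Struct.
Variables (R : realType) (n N : nat) (G : 'I_N -> {set 'I_n}) (w : 'I_N -> R).

Lemma sum_delta (f : 'I_n -> R) (a : 'I_n) :
  \sum_(k < n) (k == a)%:R * f k = f a.
Proof.
rewrite (bigD1 a) //= eqxx mul1r big1 ?addr0 // => k /negbTE ->.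
by rewrite mul0r.
Qed.

Lemma Sel_mulE i (v : 'cV[R]_n) r : (Sel R G i *m v) r 0 = v (enum_val r) 0.
Proof.
rewrite mxE -(sum_delta (fun k => v k 0) (enum_val r)).
by apply: eq_bigr => k _; rewrite mxE.
Qed.

Lemma cnt_delta i (j : 'I_n) :
  \sum_(r < #|G i|) (j == enum_val r)%:R = (j \in G i)%:R :> R.
Proof.
case: (boolP (j \in G i)) => jG.
  rewrite (bigD1 (enum_rank_in jG j)) //= enum_rankK_in // eqxx big1 ?addr0 //.
  move=> r rne; case: eqP => // ej; move/negP: rne; case.
  by apply/eqP; apply: enum_val_inj; rewrite enum_rankK_in // -ej.
rewrite big1 // => r _; case: eqP => // ej.
by move: jG; rewrite ej enum_valP.
Qed.

Lemma blockv_Lop (v : 'cV[R]_n) i :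
  blockv G (Lop G w *m v) i = w i *: (Sel R G i *m v).
Proof. by rewrite /blockv /Lop -submxcol_mul mxcolK scalemxAl. Qed.

Lemma l12_Lop (v : 'cV[R]_n) : (forall i, 0 <= w i) ->
  l12 (Lop G w *m v) = \sum_(i < N) w i * vnorm (Sel R G i *m v).
Proof.
move=> wp; apply: eq_bigr => i _; rewrite blockv_Lop vnormZ ger0_norm //.
Qed.

End Struct.

Section Lh.
Variables (R : realType) (n N : nat) (G : 'I_N -> {set 'I_n}) (w : 'I_N -> R).
Variable x : 'cV[R]_n.

Definition H i : 'M[R]_(#|G i|, n) := submxcol (Lhat G w x) i.

Lemma HE i : H i = w i *: Sel R G i
   - ((active G x i)%:R *: (w i *: Sel R G i)) *m PTxperp G x.
Proof.
rewrite /H /Lhat submxcolB /Lop mxcolK -submxcol_mul /PTz mul_mxdiag_mxcol mxcolK.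
by rewrite mul_scalar_mx.
Qed.

Lemma H_inactive i : ~~ active G x i -> H i = w i *: Sel R G i.
Proof. by move/negbTE=> hi; rewrite HE hi scale0r mul0mx subr0. Qed.

Lemma H_entry i r j : j \notin Ex G x ->
  H i r j = w i * (j == enum_val r)%:R * (1 - (active G x i)%:R).
Proof.
move=> jE; rewrite HE /PTxperp mul_mx_diag !mxE jE /=; ring.
Qed.

Lemma Lhat_mxcol : Lhat G w x = \mxcol_i H i.
Proof. by rewrite /H submxcolK. Qed.

Lemma LtL : (Lhat G w x)^T *m Lhat G w x = \sum_i (H i)^T *m H i.
Proof. by rewrite {1}Lhat_mxcol tr_mxcol Lhat_mxcol mul_mxrow_mxcol. Qed.

Lemma blockv_Lhat_inactive (v : 'cV[R]_n) t : ~~ active G x t ->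
  blockv G (Lhat G w x *m v) t = w t *: (Sel R G t *m v).
Proof. by move=> ht; rewrite /blockv -submxcol_mul -/(H t) H_inactive // scalemxAl. Qed.

Lemma LtL_entry (u : 'cV[R]_n) j : j \notin Ex G x ->
  (((Lhat G w x)^T *m Lhat G w x) *m u) j 0 =
  (\sum_i (~~ active G x i)%:R * w i ^+ 2 * (j \in G i)%:R) * u j 0.
Proof.
move=> jE; rewrite LtL mulmx_suml summxE mulr_suml; apply: eq_bigr => i _.
rewrite -mulmxA mxE.
case: (boolP (active G x i)) => hi.
  rewrite /= !mul0r big1 // => r _; rewrite mxE H_entry // hi.
  by rewrite subrr mulr0 mul0r.
rewrite /= -cnt_delta mulr_sumr mulr_suml; apply: eq_bigr => r _.
rewrite mxE H_entry // (negbTE hi) H_inactive // -scalemxAl mxE Sel_mulE.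
case: eqP => [->|_] /=; ring.
Qed.

End Lh.

Section Main.
Variables (R : realType) (n N m : nat) (G : 'I_N -> {set 'I_n}) (w : 'I_N -> R).
Variables (A : 'M[R]_(m, n)) (y : 'cV[R]_m) (lam : R) (x : 'cV[R]_n).

Lemma dotZl k c (a b : 'cV[R]_k) : dot (c *: a) b = c * dot a b.
Proof. by rewrite /dot mulr_sumr; apply: eq_bigr => i _; rewrite mxE mulrA. Qed.

Lemma dotNl k (a b : 'cV[R]_k) : dot (- a) b = - dot a b.
Proof. by rewrite /dot -sumrN; apply: eq_bigr => i _; rewrite mxE mulNr. Qed.

Lemma dot_tr (r : 'cV[R]_m) (d : 'cV[R]_n) : dot r (A *m d) = dot (A^T *m r) d.
Proof. by rewrite -!dotE trmx_mul trmxK mulmxA. Qed.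

Lemma inactive_case t : (forall i, 0 < w i) ->
  (Lhat G w x)^T *m Lhat G w x \in unitmx -> ~~ active G x t ->
  vnorm (blockv G (umin G w A y lam x) t) <= vnorm (subv G (beta A y lam x) t) / w t.
Proof.
move=> wp HU ht.
set D := (Lhat G w x)^T *m Lhat G w x.
set b := beta A y lam x.
set u := invmx D *m b.
have Du : D *m u = b by rewrite /u mulKVmx.
rewrite /umin -/D -/b -mulmxA -/u blockv_Lhat_inactive // vnormZ ger0_norm; last exact: ltW.
have wt := wp t.
have w2 : 0 < w t ^+ 2 by rewrite exprn_gt0.
suff : vnorm (Sel R G t *m u) <= vnorm ((w t ^+ 2)^-1 *: subv G b t).
  rewrite vnormZ ger0_norm; last by rewrite invr_ge0 ltW.
  move=> h; rewrite -(ler_pM2l wt) in h; apply: (le_trans h).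
  rewrite mulrA expr2 invfM mulrA divff ?gt_eqF // mul1r.
  by rewrite mulrC.
apply: vnorm_le => r; rewrite /subv [X in _ <= `|X|]mxE !Sel_mulE.
set j := enum_val r.
have jG : j \in G t by exact: enum_valP.
have jE : j \notin Ex G x.
  rewrite /Ex inE; apply/negP => /forallP /(_ t); rewrite ht /= jG //.
have E : (D *m u) j 0 = b j 0 by rewrite Du.
move: E; rewrite /D LtL_entry // => E.
set d := \sum_i _ in E.
have dge : w t ^+ 2 <= d.
  rewrite /d (bigD1 t) //= ht jG /= mul1r. rewrite mulr1n mulr1 lerDl.
  apply: sumr_ge0 => i _; apply: mulr_ge0; [apply: mulr_ge0; [exact: ler0n | exact: sqr_ge0] | exact: ler0n].
have h1 : w t ^+ 2 * `|u j 0| <= `|b j 0|.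
  rewrite -E normrM (ger0_norm (le_trans (ltW w2) dge)).
  by apply: ler_wpM2r.
rewrite normrM ger0_norm; last by rewrite invr_ge0 ltW.
rewrite -(ler_pM2l w2) mulrA divff ?gt_eqF // mul1r //.
Qed.


Lemma active_case t : (forall i, 0 < w i) -> 0 < lam ->
  (forall x' : 'cV[R]_n, objective G w A y lam x <= objective G w A y lam x') ->
  active G x t ->
  w t <= vnorm (subv G (beta A y lam x) t).
Proof.
move=> wp lamp opt ht.
set b := beta A y lam x.
set s := vnorm (subv G x t).
have sp : 0 < s by apply: vnorm_gt0.
have wt := wp t.
set d : 'cV[R]_n := \col_j ((j \in G t)%:R * x j 0).
have dE : forall j, d j 0 = (j \in G t)%:R * x j 0 by move=> j; rewrite /d mxE.
set r := A *m x - y.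
set q := vnorm (A *m d) ^+ 2 / (2 * lam).
have q0 : 0 <= q by rewrite divr_ge0 ?sqr_ge0 // mulr_ge0 // ltW.
have dbE : dot b d = dot (subv G b t) (subv G x t).
  rewrite /dot.
  transitivity (\sum_(j < n) \sum_(k < #|G t|) (j == enum_val k)%:R * (b j 0 * x j 0)).
    apply: eq_bigr => j _; rewrite -mulr_suml cnt_delta dE; ring.
  rewrite exchange_big /=; apply: eq_bigr => k _.
  rewrite !Sel_mulE -(sum_delta (fun j => b j 0 * x j 0) (enum_val k)).
  by apply: eq_bigr => j _; rewrite (eq_sym j).
have key : w t * s <= dot b d.
  apply: (limit_arg q0) => e ep e1.
  have := opt (x - e *: d).
  rewrite /objective.
  have -> : A *m (x - e *: d) - y = r - e *: (A *m d).
    by rewrite /r mulmxBr -scalemxAr addrAC.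
  rewrite !vnorm_sq dot_expand.
  have Hdr : dot r (A *m d) = - lam * dot b d.
    rewrite dot_tr /b /beta dotNl dotZl; field; exact: lt0r_neq0.
  rewrite Hdr -/r.
  have pen : l12 (Lop G w *m (x - e *: d)) <= l12 (Lop G w *m x) - e * (w t * s).
    have wp0 : forall i, 0 <= w i by move=> i; exact: ltW.
    rewrite !l12_Lop // (bigD1 t) //= [X in _ <= X - _](bigD1 t) //=.
    have -> : Sel R G t *m (x - e *: d) = (1 - e) *: (Sel R G t *m x).
      apply/matrixP => k l; rewrite (ord1 l) Sel_mulE [RHS]mxE Sel_mulE !mxE ?dE enum_valP /=. ring.
    rewrite vnormZ ger0_norm ?subr_ge0 //.
    have : \sum_(i < N | i != t) w i * vnorm (Sel R G i *m (x - e *: d)) <=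
           \sum_(i < N | i != t) w i * vnorm (Sel R G i *m x).
      apply: ler_sum => i _; apply: ler_wpM2l => //; apply: vnorm_le => k.
      rewrite !Sel_mulE !mxE.
      case: (enum_val k \in G t) => /=.
        rewrite mul1r -{1}(mul1r (x _ 0)) -mulrBl normrM ger0_norm ?subr_ge0 //.
        by rewrite ler_piMl ?normr_ge0 // lerBlDr lerDl ltW.
      by rewrite mul0r mulr0 subr0.
    rewrite -/s; lra.
  have E2 : (2 * lam)^-1 * (dot r r - 2 * e * (- lam * dot b d) + e ^+ 2 * dot (A *m d) (A *m d))
          = (2 * lam)^-1 * dot r r + e * dot b d + e * (e * q).
    rewrite /q vnorm_sq; field; exact: lt0r_neq0.
  rewrite E2 => h.
  have h2 : e * (w t * s) <= e * (dot b d + e * q) by lra.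
  by rewrite -(ler_pM2l ep).
have := cauchy_schwarz (subv G b t) (subv G x t).
rewrite -dbE -/s => h.
have : w t * s <= vnorm (subv G b t) * s by apply: le_trans h.
by rewrite ler_pM2r.
Qed.

End Main.

Theorem proposition3p7 (R : realType) (n N m : nat)
  (G : 'I_N -> {set 'I_n}) (w : 'I_N -> R)
  (A : 'M[R]_(m, n)) (y : 'cV[R]_m) (lam : R) (xstar : 'cV[R]_n) :
  (forall i, G i != set0) ->
  \bigcup_(i < N) G i = [set: 'I_n] ->
  (forall i, 0 < w i) ->
  0 < lam ->
  (forall x : 'cV[R]_n, objective G w A y lam xstar <= objective G w A y lam x) ->
  (Lhat G w xstar)^T *m Lhat G w xstar \in unitmx ->
  forall t : 'I_N,
    vnorm (blockv G (udag G w A y lam xstar) t)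
      <= vnorm (subv G (beta A y lam xstar) t) / w t.
Proof.
move=> _ _ wp lamp opt HU t.
case: (boolP (active G xstar t)) => ht; last first.
  by rewrite /udag /blockv mxcolK (negbTE ht); apply: inactive_case.
rewrite /udag /blockv mxcolK ht vnormZ.
have sp : 0 < vnorm (subv G xstar t) by apply: vnorm_gt0.
rewrite ger0_norm; last by rewrite invr_ge0 ltW.
rewrite mulVf ?gt_eqF //.
rewrite -(ler_pM2r (wp t)) mul1r divfK ?gt_eqF //.
exact: active_case.
Qed.
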